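(* Let $N\ge 2$ and $M>2$ be integers and consider the indirect control system described in the context, with real Lie algebra $\mathcal{L}$ generated by $iH_0$, $i(1_S\otimes\sigma_x^j)$ and $i(1_S\otimes\sigma_y^j)$, $j=1,\dots,M$. If Condition 1 and Condition 2 hold, then $i(1_S\otimes\sigma_{[\alpha]})\in\mathcal{L}$ for every $[\alpha]\in\{x,y,z,0\}^M$ with $[\alpha]\neq(0,\dots,0)$.
   Context: The controlled system is $\mathbb{C}^N$ with orthonormal basis $|1\rangle,\dots,|N\rangle$; $e_{jk}=|j\rangle\langle k|$. $H_S=\sum_{j=1}^N E_j e_{jj}$ with real $E_j$, $\sum_j E_j=0$. For $1\le j<k\le N$: $x_{jk}=e_{jk}+e_{kj}$, $y_{jk}=i(e_{jk}-e_{kj})$, $h_j=e_{jj}-e_{j+1,j+1}$; $x_j=x_{j,j+1}$, $y_j=y_{j,j+1}$; $s_j^{(1)}=x_j$, $s_j^{(2)}=y_j$. The accessor is $(\mathbb{C}^2)^{\otimes M}$; $\sigma_\alpha^j$ is the Pauli matrix $\sigma_\alpha$ ($\alpha=x,y,z$) on the $j$-th qubit, $\sigma_0=1$, and $\sigma_{[\alpha]}=\prod_{j=1}^M\sigma^j_{\alpha_j}$ for $[\alpha]\in\{x,y,z,0\}^M$. $1_S,1_A$ denote identities. $H_A=\sum_{j=1}^M\hbar\omega_j\sigma_z^j+\sum_{j=1}^{M-1}c_j\sigma_x^j\sigma_x^{j+1}$; $H_S'=\sum_{j=1}^{N-1}d_j x_j\otimes 1_A$; $H_{SA}=\sum_{j=1}^{N-1}\sum_{k=1}^2\sum_{[\alpha]\in\{x,y\}^M}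 g^{j(k)}_{[\alpha]}\, s_j^{(k)}\otimes\sigma_{[\alpha]}$; all coefficients real; $H_0=H_S\otimes 1_A+H_S'+1_S\otimes H_A+H_{SA}$. Condition 1: $c_j\neq 0$ for $j=1,\dots,M-1$. Condition 2: there exist $2(N-1)$ elements $[\beta]_1,\dots,[\beta]_{2(N-1)}$ of $\{x,y\}^M$ such that the $2(N-1)\times 2(N-1)$ matrix $G$ whose $r$-th row is $(g^{1(1)}_{[\beta]_r},\dots,g^{(N-1)(1)}_{[\beta]_r},g^{1(2)}_{[\beta]_r},\dots,g^{(N-1)(2)}_{[\beta]_r})$ has nonzero determinant. *)

(* Defs.v *)
From HB Require Import structures.
From mathcomp Require Import all_boot all_order all_algebra.
From mathcomp Require Import reals complex.
Set Implicit Arguments. Unset Strict Implicit. Unset Printing Implicit Defensive.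
Import Order.TTheory GRing.Theory Num.Theory.
Local Open Scope ring_scope.
Local Open Scope complex_scope.

Section Model.
Variables (R : realType) (N M : nat).
Local Notation C := R[i].

Inductive pauli := P0 | PX | PY | PZ.

(* Matrix entries of the Pauli matrices in the qubit basis
   false = |0>, true = |1> (sigma_z |0> = |0>). *)
Definition pauli_entry (a : pauli) (b b' : bool) : C :=
  match a with
  | P0 => (b == b')%:R
  | PX => (b != b')%:R
  | PY => if b == b' then 0 else if b then 'i%C else - 'i%C
  | PZ => if b == b' then (if b then -1 else 1) else 0
  end.

(* basis of the accessor (C^2)^{(x)M}: bit strings *)
Definition acc_idx := {ffun 'I_M -> bool}.
(* basis of C^N (x) (C^2)^{(x)M}: |s> (x) |b>, s : 'I_N  (|s+1> in the paper) *)
Definition idx := ('I_N * acc_idx)%type.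
Definition dim := #|{: idx}|.
Definition mx := 'M[C]_dim.

Definition pstr (alpha : 'I_M -> pauli) (b b' : acc_idx) : C :=
  \prod_(j < M) pauli_entry (alpha j) (b j) (b' j).

(* sigma_a on qubit number j (0-based) *)
Definition single (j : nat) (a : pauli) : 'I_M -> pauli :=
  fun l => if val l == j then a else P0.

Definition tens (A : 'I_N -> 'I_N -> C) (B : acc_idx -> acc_idx -> C) : mx :=
  \matrix_(p, q) (A (enum_val p).1 (enum_val q).1 * B (enum_val p).2 (enum_val q).2).

Definition idS (s s' : 'I_N) : C := (s == s')%:R.
Definition idA (b b' : acc_idx) : C := (b == b')%:R.

(* e_{jk} = |j><k| (0-based nat labels) *)
Definition eS (j k : nat) (s s' : 'I_N) : C := ((val s == j) && (val s' == k))%:R.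
Definition xS (j k : nat) s s' : C := eS j k s s' + eS k j s s'.
Definition yS (j k : nat) s s' : C := 'i%C * (eS j k s s' - eS k j s s').
(* s_j^{(1)} = x_j, s_j^{(2)} = y_j ; k = 0 <-> (1), k = 1 <-> (2) *)
Definition sS (j : nat) (k : 'I_2) : 'I_N -> 'I_N -> C :=
  if val k == 0%N then xS j j.+1 else yS j j.+1.

(* element of {x,y}^M encoded by a bit string: false = x, true = y *)
Definition xy (beta : acc_idx) : 'I_M -> pauli := fun l => if beta l then PY else PX.

Definition H_S (E : 'I_N -> R) : mx :=
  tens (fun s s' => (s == s')%:R * (E s)%:C) idA.
Definition H_A (hbar : R) (omega : 'I_M -> R) (c : 'I_M.-1 -> R) : mx :=
  \sum_(j < M) ((hbar * omega j)%:C *: tens idS (pstr (single j PZ)))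
  + \sum_(j < M.-1) ((c j)%:C *:
       (tens idS (pstr (single j PX)) *m tens idS (pstr (single j.+1 PX)))).
Definition H_S' (d : 'I_N.-1 -> R) : mx :=
  \sum_(j < N.-1) ((d j)%:C *: tens (xS j j.+1) idA).
Definition H_SA (g : 'I_N.-1 -> 'I_2 -> acc_idx -> R) : mx :=
  \sum_(j < N.-1) \sum_(k < 2) \sum_(beta : acc_idx)
     ((g j k beta)%:C *: tens (sS j k) (pstr (xy beta))).
Definition H_0 E hbar omega c d g : mx :=
  H_S E + H_S' d + H_A hbar omega c + H_SA g.

(* Condition 2 matrix G: row r = (g^{1(1)}_{beta_r},...,g^{(N-1)(1)}_{beta_r},
   g^{1(2)}_{beta_r},...,g^{(N-1)(2)}_{beta_r}) *)
Definition Gmx (g : 'I_N.-1 -> 'I_2 -> acc_idx -> R)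
    (beta : 'I_(N.-1 + N.-1) -> acc_idx) : 'M[R]_(N.-1 + N.-1) :=
  \matrix_(r, col) match split col with
                   | inl j => g j 0 (beta r)
                   | inr j => g j 1 (beta r)
                   end.

End Model.

Inductive lie_gen (K : numFieldType) (n : nat) (S : 'M[K]_n -> Prop) : 'M[K]_n -> Prop :=
| lie_base A : S A -> lie_gen S A
| lie_add A B : lie_gen S A -> lie_gen S B -> lie_gen S (A + B)
| lie_scale (r : K) A : r \is Num.real -> lie_gen S A -> lie_gen S (r *: A)
| lie_bracket A B : lie_gen S A -> lie_gen S B -> lie_gen S (A *m B - B *m A).

(* Main.v *)
Require Import Defs.
From HB Require Import structures.
From mathcomp Require Import all_boot all_order all_algebra.
From mathcomp Require Import reals complex zify ring.
Import Order.TTheory GRing.Theory Num.Theory.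
Set Implicit Arguments. Unset Strict Implicit. Unset Printing Implicit Defensive.
Local Open Scope ring_scope.
Local Open Scope complex_scope.

Definition p2n a := match a with P0 => 0%N | PX => 1%N | PY => 2%N | PZ => 3%N end.
Definition n2p (n : nat) := match n with 1 => PX | 2 => PY | 3 => PZ | _ => P0 end.
Lemma p2nK : cancel p2n n2p. Proof. by case. Qed.
HB.instance Definition _ := Equality.copy pauli (can_type p2nK).

Section Pauli.
Variable R : realType.
Local Notation C := R[i].

Lemma ii : 'i * 'i = -1 :> C.
Proof. by rewrite -expr2 sqr_i. Qed.

Lemma realC (x : R) : x%:C \is Num.real.
Proof. by rewrite realE ler0c -[0 : C]/((0:R)%:C) lecR -realE num_real. Qed.

Definition pmul (a b : pauli) : pauli :=
  match a, b with
  | P0, b => b | a, P0 => a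
  | PX, PX => P0 | PY, PY => P0 | PZ, PZ => P0
  | PX, PY => PZ | PY, PX => PZ
  | PY, PZ => PX | PZ, PY => PX
  | PZ, PX => PY | PX, PZ => PY
  end.

Definition pe (a b : pauli) : nat :=
  match a, b with
  | PX, PY => 1 | PY, PX => 3
  | PY, PZ => 1 | PZ, PY => 3
  | PZ, PX => 1 | PX, PZ => 3
  | _, _ => 0
  end%N.

Definition anti (a b : pauli) : bool :=
  match a, b with
  | PX, PY | PY, PX | PY, PZ | PZ, PY | PZ, PX | PX, PZ => true
  | _, _ => false
  end.

Lemma pauli_mul1 (a b : pauli) (x y : bool) :
  \sum_(c : bool) pauli_entry R a x c * pauli_entry R b c y
  = 'i ^+ pe a b * pauli_entry R (pmul a b) x y.
Proof.
rewrite big_bool /=.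
case: a; case: b; case: x; case: y;
  rewrite /= ?expr0 ?expr1 ?exprS ?expr0 ?mulr1 ?mul1r ?mulr0 ?mul0r ?addr0 ?add0r
   ?mulrN1 ?mulN1r ?mulrN ?mulNr ?opprK ?ii ?opprK ?mulrN1 ?mulN1r ?mulrN ?mulNr ?opprK ?ii ?opprK //.
Qed.


Variables N M : nat.
Local Notation mx := (mx R N M).
Local Notation acc := (acc_idx M).

Lemma pstr_mul (a b : 'I_M -> pauli) (x y : acc) :
  \sum_(z : acc) pstr R a x z * pstr R b z y =
  (\prod_j 'i ^+ pe (a j) (b j)) * pstr R (fun j => pmul (a j) (b j)) x y.
Proof.
rewrite /pstr.
transitivity (\prod_j \sum_(c : bool) pauli_entry R (a j) (x j) c * pauli_entry R (b j) c (y j)).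
  rewrite bigA_distr_bigA /=; apply: eq_bigr => z _; by rewrite big_split.
rewrite -big_split /=; apply: eq_bigr => j _.
by rewrite pauli_mul1.
Qed.

Lemma tens_mul (A A' : 'I_N -> 'I_N -> C) (B B' : acc -> acc -> C) :
  tens A B *m tens A' B' =
  tens (fun s s'' => \sum_s' A s s' * A' s' s'') (fun x y => \sum_z B x z * B' z y).
Proof.
apply/matrixP => p r; rewrite !mxE.
under eq_bigr => q _ do rewrite !mxE.
rewrite -(big_enum_val (A := predT)
   (fun q : idx N M => A (enum_val p).1 q.1 * B (enum_val p).2 q.2 *
                      (A' q.1 (enum_val r).1 * B' q.2 (enum_val r).2))) /=.
rewrite -(pair_big predT predT (fun (s : 'I_N) (z : acc) =>
   A (enum_val p).1 s * B (enum_val p).2 z * (A' s (enum_val r).1 * B' z (enum_val r).2))) /=.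
rewrite mulr_suml; apply: eq_bigr => s _.
rewrite mulr_sumr; apply: eq_bigr => z _.
by rewrite mulrACA.
Qed.


Definition T (a : 'I_M -> pauli) : mx := tens (@idS R N) (pstr R a).
Definition P (a : 'I_M -> pauli) : mx := 'i *: T a.
Definition br (A B : mx) : mx := A *m B - B *m A.
Definition smul (a b : 'I_M -> pauli) : 'I_M -> pauli := fun j => pmul (a j) (b j).

Lemma eq_tens (A A' : 'I_N -> 'I_N -> C) (B B' : acc -> acc -> C) :
  (forall s s', A s s' = A' s s') -> (forall x y, B x y = B' x y) -> tens A B = tens A' B'.
Proof. by move=> hA hB; apply/matrixP => p q; rewrite !mxE hA hB. Qed.

Lemma tens_scaleR (A : 'I_N -> 'I_N -> C) (B : acc -> acc -> C) k :
  tens A (fun x y => k * B x y) = k *: tens A B.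
Proof. by apply/matrixP => p q; rewrite !mxE mulrCA. Qed.

Lemma idS_mul (s s'' : 'I_N) : \sum_s' @idS R N s s' * idS R s' s'' = idS R s s''.
Proof.
rewrite (bigD1 s) //= big1 ?addr0; last first.
  by move=> s' /negbTE ne; rewrite /idS eq_sym ne mul0r.
by rewrite /idS eqxx mul1r.
Qed.

Lemma eq_pstr (a b : 'I_M -> pauli) x y : (forall j, a j = b j) -> pstr R a x y = pstr R b x y.
Proof. by move=> h; apply: eq_bigr => j _; rewrite h. Qed.

Lemma eq_T (a b : 'I_M -> pauli) : (forall j, a j = b j) -> T a = T b.
Proof. by move=> h; apply: eq_tens => // x y; apply: eq_pstr. Qed.

Lemma eq_P (a b : 'I_M -> pauli) : (forall j, a j = b j) -> P a = P b.
Proof. by move=> h; rewrite /P (eq_T h). Qed.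

Lemma T_mul (a b : 'I_M -> pauli) :
  T a *m T b = ('i ^+ (\sum_j pe (a j) (b j))) *: T (smul a b).
Proof.
rewrite /T tens_mul -prodrXr -tens_scaleR; apply: eq_tens => [s s'|x y].
  exact: idS_mul.
exact: pstr_mul.
Qed.

Lemma pmulC a b : pmul a b = pmul b a.
Proof. by case: a; case: b. Qed.

Lemma pe_sum a b : (pe a b + pe b a = 4 * anti a b)%N.
Proof. by case: a; case: b. Qed.

Lemma pe_split a b : (pe a b = anti a b + 2 * (pe a b == 3))%N.
Proof. by case: a; case: b. Qed.

Lemma br_P (a b : 'I_M -> pauli) :
  br (P a) (P b) = - ('i ^+ (\sum_j pe (a j) (b j)) - 'i ^+ (\sum_j pe (b j) (a j))) *: T (smul a b).
Proof.
rewrite /br /P -!scalemxAl -!scalemxAr !scalerA !T_mul (eq_T (b := smul a b) (a := smul b a)); last first.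
  by move=> j; rewrite /smul pmulC.
by rewrite !scalerA -scalerBl ii !mulN1r opprD.
Qed.

Lemma expi_odd (m : nat) : 'i ^+ (2 * m + 1) = (-1) ^+ m * 'i :> C.
Proof. by rewrite exprD exprM sqr_i expr1. Qed.

Lemma br_P_anti (a b : 'I_M -> pauli) :
  odd (\sum_j anti (a j) (b j)) ->
  exists r : R, r != 0 /\ br (P a) (P b) = r%:C *: P (smul a b).
Proof.
move=> hodd.
set K := (\sum_j anti (a j) (b j))%N in hodd.
set E := (\sum_j pe (a j) (b j))%N.
set E' := (\sum_j pe (b j) (a j))%N.
have hEE : (E + E' = 4 * K)%N.
  by rewrite /E /E' /K -big_split big_distrr /=; apply: eq_bigr => j _; rewrite pe_sum.
have hE : (E = K + 2 * \sum_j (pe (a j) (b j) == 3))%N.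
  by rewrite /E /K big_distrr -big_split /=; apply: eq_bigr => j _; rewrite -pe_split.
have oE : odd E by rewrite hE oddD oddM /= addbF.
have oE' : odd E'.
  have := congr1 odd hEE; rewrite oddD oddM /= => h.
  by move: h; rewrite oE; case: (odd E').
have hm := odd_double_half E; have hm' := odd_double_half E'.
rewrite oE in hm; rewrite oE' in hm'.
set m := E./2 in hm; set m' := E'./2 in hm'.
have eE : E = (2 * m + 1)%N by rewrite -hm -muln2 mulnC addnC.
have eE' : E' = (2 * m' + 1)%N by rewrite -hm' -muln2 mulnC addnC.
have hmm : (m + m' + 1 = 2 * K)%N.
  clearbody m m' E E' K; subst E E'; lia.
have om : odd (m + m') = true.
  have := congr1 odd hmm; rewrite oddD oddM /= => h.
  by move: h; case: (odd (m + m')).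
exists (-2 * (-1) ^+ m).
split.
  by rewrite mulf_neq0 // ?signr_eq0 // oppr_eq0 pnatr_eq0.
rewrite br_P -/E -/E' eE eE' !expi_odd /P scalerA.
have hs : (-1) ^+ m' = - (-1) ^+ m :> C.
  rewrite -signr_odd -[in RHS]signr_odd.
  move: om; rewrite oddD; case: (odd m); case: (odd m') => //= _.
  by rewrite expr0 expr1 opprK.
rewrite hs; congr (_ *: _).
rewrite rmorphM rmorphN rmorphXn rmorphN rmorph1 rmorph_nat.
ring.
Qed.



Definition upd (a : 'I_M -> pauli) (j : 'I_M) (v : pauli) : 'I_M -> pauli :=
  fun l => if l == j then v else a l.
Definition two (k : nat) : 'I_M -> pauli := smul (single (M:=M) k PX) (single (M:=M) k.+1 PX).

Lemma anti0 a : anti a P0 = false. Proof. by case: a. Qed.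
Lemma pmul0 a : pmul a P0 = a. Proof. by case: a. Qed.

Lemma cnt_single (a : 'I_M -> pauli) (j : 'I_M) w :
  (\sum_l anti (a l) (single (M:=M) j w l))%N = anti (a j) w.
Proof.
rewrite (bigD1 j) //= big1 ?addn0; first by rewrite /single eqxx.
by move=> l hl; rewrite /single (inj_eq (@ord_inj M)) (negbTE hl) anti0.
Qed.

Lemma smul_single (a : 'I_M -> pauli) (j : 'I_M) w l :
  smul a (single (M:=M) j w) l = if l == j then pmul (a j) w else a l.
Proof.
rewrite /smul /single (inj_eq (@ord_inj M)).
by case: eqP => [-> |]; rewrite ?pmul0.
Qed.

Lemma two_val k (l : 'I_M) : two k l = if ((l : nat) == k) || ((l : nat) == k.+1) then PX else P0.
Proof.
rewrite /two /smul /single.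
case: ((l : nat) =P k) => [e|_]; last by case: (_ == k.+1).
rewrite /= e; have -> : (k == k.+1) = false by lia.
by [].
Qed.

Lemma cnt_two (a : 'I_M -> pauli) (k k1 : 'I_M) :
  (k1 : nat) = (k : nat).+1 ->
  (\sum_l anti (a l) (two k l))%N = (anti (a k) PX + anti (a k1) PX)%N.
Proof.
move=> hk1.
have nk : k1 != k by rewrite -(inj_eq (@ord_inj M)) hk1; lia.
rewrite (bigD1 k) //= (bigD1 k1) //= big1 ?addn0.
  by rewrite !two_val eqxx /= hk1 eqxx orbT.
move=> l /andP [h1 h2]; rewrite two_val.
by rewrite -hk1 !(inj_eq (@ord_inj M)) (negbTE h1) (negbTE h2) anti0.
Qed.

Lemma rot_facts a v : a != P0 -> v != P0 -> v != a ->
  [/\ pmul a v != P0, anti a (pmul a v) & pmul a (pmul a v) = v].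
Proof. by case: a; case: v. Qed.

Section Gen.
Variable L : mx -> Prop.
Hypothesis Lkey : forall a b, L (P a) -> L (P b) -> odd (\sum_j anti (a j) (b j)) ->
  L (P (smul a b)).
Hypothesis Lsingle : forall (j : 'I_M) w, w != P0 -> L (P (single (M:=M) j w)).
Hypothesis Ltwo : forall k, (k.+1 < M)%N -> L (P (two k)).

Lemma Leq a b : (forall j, a j = b j) -> L (P a) -> L (P b).
Proof. by move=> h; rewrite (eq_P h). Qed.

Lemma Lrot (a : 'I_M -> pauli) (j : 'I_M) v : L (P a) -> a j != P0 -> v != P0 ->
  L (P (upd a j v)).
Proof.
move=> La aj v0.
case: (eqVneq v (a j)) => [->|nv].
  by apply: Leq La => l; rewrite /upd; case: eqP => [->|].
have [w0 aw ww] := rot_facts aj v0 nv.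
have := Lkey La (Lsingle j w0); rewrite cnt_single aw => /(_ isT).
by apply: Leq => l; rewrite smul_single ww.
Qed.


Definition Claim (n : nat) := forall a : 'I_M -> pauli,
  (forall j : 'I_M, (n <= j)%N -> a j = P0) -> (exists j, a j != P0) -> L (P a).

Lemma ord_neq (l j : 'I_M) : l != j -> (l : nat) != j.
Proof. by rewrite (inj_eq (@ord_inj M)). Qed.

Section Step.
Variables (jn jp : 'I_M).
Hypothesis hj : (jn : nat) = (jp : nat).+1.
Hypothesis IH : Claim jn.

Lemma jnp : jn != jp.
Proof. by rewrite -(inj_eq (@ord_inj M)) hj; lia. Qed.

Lemma smul_two (a : 'I_M -> pauli) l :
  smul a (two jp) l = if l == jp then pmul (a jp) PX else if l == jn then pmul (a jn) PX
                      else a l.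
Proof.
rewrite /smul two_val.
case: (eqVneq l jp) => [->|h1]; first by rewrite eqxx.
rewrite -hj; case: (eqVneq l jn) => [->|h2]; first by rewrite eqxx orbT.
by rewrite (negbTE (ord_neq h1)) (negbTE (ord_neq h2)) pmul0.
Qed.

Lemma stepA (a : 'I_M -> pauli) : (forall j : 'I_M, (jn < j)%N -> a j = P0) ->
  a jp = PY \/ a jp = PZ -> L (P (upd a jn PX)).
Proof.
move=> supp hc.
set g := upd (upd a jn P0) jp (pmul (a jp) PX).
have Lg : L (P g).
  apply: IH.
    move=> j hjn; rewrite /g /upd.
    have -> : (j == jp) = false.
      by apply/negbTE; apply/negP => /eqP e; move: hjn; rewrite e hj ltnn.
    case: eqP => // hne; apply: supp.
    rewrite ltn_neqAle hjn andbT; apply/eqP => e; apply: hne; symmetry; exact: ord_inj.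
  by exists jp; rewrite /g /upd eqxx; case: hc => ->.
have hjp1 : (jp.+1 < M)%N by rewrite -hj.
have := Lkey Lg (Ltwo hjp1).
rewrite (cnt_two g hj) /g /upd eqxx (negbTE (jnp)) eqxx.
case: hc => hc; rewrite hc /= => /(_ isT); apply: Leq => l;
  rewrite smul_two /upd eqxx (negbTE jnp) eqxx;
  (case: (eqVneq l jp) => [->|h1]; first by rewrite eq_sym (negbTE jnp) hc);
  by case: (eqVneq l jn).
Qed.

End Step.

Lemma upd_supp (b : 'I_M -> pauli) (j : 'I_M) v n : (j <= n)%N ->
  (forall l : 'I_M, (n < l)%N -> b l = P0) -> forall l : 'I_M, (n < l)%N -> upd b j v l = P0.
Proof.
move=> hj sb l hl; rewrite /upd; case: eqP => [e|_]; last exact: sb.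
by move: hl; rewrite e ltnNge hj.
Qed.

Lemma claimS (n : nat) : (n < M)%N -> Claim n -> Claim n.+1.
Proof.
move=> hn IH a supp [j0 hj0].
set jn := Ordinal hn.
case: (eqVneq (a jn) P0) => [a0|an].
  apply: IH; last by exists j0.
  move=> j hj; case: (eqVneq (j : nat) n) => [e|ne].
    by have -> : j = jn by apply: ord_inj.
  by apply: supp; rewrite ltn_neqAle eq_sym ne hj.
destruct n as [|m].
  apply: Leq (Lsingle jn an) => l; rewrite /single.
  case: eqP => [e|ne]; first by have -> : l = jn by apply: ord_inj.
  by rewrite supp // lt0n; apply/eqP.
have hm : (m < M)%N by apply: ltnW.
set jp := Ordinal hm.
have hj : (jn : nat) = (jp : nat).+1 by [].
have jnpF : (jn == jp) = false by apply/negbTE/(jnp hj).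
have jpnF : (jp == jn) = false by rewrite eq_sym jnpF.
have caseX : forall b : 'I_M -> pauli, (forall j : 'I_M, (jn < j)%N -> b j = P0) ->
    b jp = PX -> L (P (upd b jn PX)).
  move=> b sb bx.
  have := stepA hj IH (a := upd b jp PY) (upd_supp (j:=jp) (n:=jn) PY (leqnSn _) sb) (or_introl _).
  rewrite /upd eqxx => /(_ erefl) Lb.
  have := Lrot (j := jp) (v := PX) Lb; rewrite /upd eqxx jpnF => /(_ isT isT).
  apply: Leq => l; case: (eqVneq l jp) => [->|h1] //; by rewrite jpnF bx.
have hX : L (P (upd a jn PX)).
  case hc: (a jp).
  - have := caseX (upd a jp PX) (upd_supp (j:=jp) (n:=jn) PX (leqnSn _) supp).
    rewrite {1}/upd eqxx => /(_ erefl) Lb.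
    have := Lrot (j := jn) (v := PY) Lb; rewrite /upd eqxx => /(_ isT isT) Lc.
    have := Lkey Lc (Ltwo (k := jp) hn); rewrite (cnt_two _ hj) /upd ?eqxx ?jnpF ?jpnF /=.
    move=> /(_ isT) Ld.
    have := Lrot (j := jn) (v := PX) Ld; rewrite /upd (smul_two hj) ?eqxx ?jnpF ?jpnF /=.
    move=> /(_ isT isT).
    apply: Leq => l; rewrite (smul_two hj) ?eqxx ?jnpF ?jpnF /=.
    case: ifP => // h2; case: ifP => [/eqP ->|h1]; first by rewrite hc.
    by rewrite h2 h1.
  - exact: caseX.
  - by apply: (stepA hj IH supp); left.
  - by apply: (stepA hj IH supp); right.
have := Lrot (j := jn) (v := a jn) hX; rewrite /upd eqxx => /(_ isT an).
by apply: Leq => l; case: eqP => [->|].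
Qed.

Lemma claim_all (a : 'I_M -> pauli) : (exists j, a j != P0) -> L (P a).
Proof.
have : forall n, (n <= M)%N -> Claim n.
  elim=> [_ b sb [j hj]|n IHn hn]; first by rewrite sb in hj.
  by apply: claimS hn (IHn (ltnW hn)).
move=> /(_ M (leqnn M)) h; apply: h => j; by rewrite leqNgt ltn_ord.
Qed.

End Gen.

Section Lie.
Variable S : mx -> Prop.
Local Notation Ls := (lie_gen S).

Lemma Lscale (r : R) X : Ls X -> Ls (r%:C *: X).
Proof. by move=> h; apply: lie_scale => //; apply: realC. Qed.

Lemma Lscale_inv (r : R) X : r != 0 -> Ls (r%:C *: X) -> Ls X.
Proof.
move=> r0 h; have := Lscale r^-1 h.
by rewrite scalerA -rmorphM mulVf // rmorph1 scale1r.
Qed.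

Lemma Lsub X Y : Ls X -> Ls Y -> Ls (X - Y).
Proof.
move=> hX hY; have := Lscale (-1) hY; rewrite rmorphN1 scaleN1r => hY'.
exact: lie_add.
Qed.

Lemma Lbr X Y : Ls X -> Ls Y -> Ls (br X Y).
Proof. exact: lie_bracket. Qed.

Lemma Lkey_lie a b : Ls (P a) -> Ls (P b) -> odd (\sum_j anti (a j) (b j)) ->
  Ls (P (smul a b)).
Proof.
move=> ha hb ho; have [r [r0 e]] := br_P_anti ho.
by apply: (Lscale_inv r0); rewrite -e; apply: Lbr.
Qed.
End Lie.

Definition isflip (a : pauli) := (a == PX) || (a == PY).

Lemma pa_zero a x y : isflip a = (x == y) -> pauli_entry R a x y = 0.
Proof. by case: a; case: x; case: y. Qed.

Definition ev (p : 'I_(Defs.dim N M)) : idx N M := enum_val p.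

Definition mmask (k : 'I_M) (X : mx) : mx :=
  \matrix_(p, q) (((ev p).2 k != (ev q).2 k)%:R * X p q).

Definition zs (k : 'I_M) (p : 'I_(Defs.dim N M)) : C := if (ev p).2 k then -1 else 1.

Lemma pstr_diag (a : 'I_M -> pauli) (x : acc) : pstr R a x x = \prod_j pauli_entry R (a j) (x j) (x j).
Proof. by []. Qed.

Lemma pstr_off (a : 'I_M -> pauli) (x y : acc) (j : 'I_M) :
  isflip (a j) = (x j == y j) -> pstr R a x y = 0.
Proof. by move=> h; rewrite /pstr (bigD1 j) //= pa_zero // mul0r. Qed.

Lemma Tz (k : 'I_M) : T (single (M:=M) k PZ) = diag_mx (\row_p zs k p).
Proof.
apply/matrixP => p q; rewrite !mxE.
case: (eqVneq p q) => [<-|npq].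
  rewrite mulr1n /idS eqxx mul1r /pstr (bigD1 k) //= big1.
    by rewrite mulr1 /single eqxx /zs /=; case: ((ev p).2 k).
  move=> j hj; rewrite /single (inj_eq (@ord_inj M)) (negbTE hj) /=.
  by rewrite eqxx.
rewrite mulr0n.
have hne : ev p != ev q by apply: contra npq => /eqP /enum_val_inj ->.
case: (eqVneq (ev p).1 (ev q).1) => e1; last by rewrite /idS (negbTE e1) mul0r.
have e2 : (ev p).2 != (ev q).2.
  apply: contra hne => /eqP e2; apply/eqP.
  by move: e1 e2; case: (ev p) => a b; case: (ev q) => c d /= -> ->.
have [j hj] : exists j, (ev p).2 j != (ev q).2 j.
  apply/existsP; rewrite -negb_forall; apply: contra e2 => /forallP h.
  by apply/eqP/ffunP => j; apply/eqP.
rewrite (pstr_off (j := j)) ?mulr0 //.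
by rewrite (negbTE hj) /single; case: (_ == _).
Qed.

Lemma zs2 k p : zs k p * zs k p = 1.
Proof. by rewrite /zs; case: ((ev p).2 k); rewrite ?mulrNN mulr1. Qed.

Lemma brZ (k : 'I_M) (Y : mx) :
  br (P (single (M:=M) k PZ)) Y = \matrix_(p, q) ('i * (zs k p - zs k q) * Y p q).
Proof.
rewrite /br /P -scalemxAl -scalemxAr -scalerBr Tz mul_diag_mx mul_mx_diag.
apply/matrixP => p q; rewrite !mxE; ring.
Qed.

Lemma mask_br (k : 'I_M) (X : mx) :
  br (P (single (M:=M) k PZ)) (br (P (single (M:=M) k PZ)) X) = (-4 : R)%:C *: mmask k X.
Proof.
rewrite !brZ; apply/matrixP => p q; rewrite !mxE.
have -> : 'i * (zs k p - zs k q) * ('i * (zs k p - zs k q) * X p q)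
   = ('i * 'i) * ((zs k p - zs k q) * (zs k p - zs k q)) * X p q by ring.
rewrite ii rmorphN rmorph_nat /zs; case: ((ev p).2 k); case: ((ev q).2 k) => /=.
all: rewrite /=; ring.
Qed.

Lemma mask_tens (k : 'I_M) (A : 'I_N -> 'I_N -> C) (a : 'I_M -> pauli) :
  mmask k (tens A (pstr R a)) = (isflip (a k))%:R *: tens A (pstr R a).
Proof.
apply/matrixP => p q; rewrite !mxE /ev.
set x := (enum_val p).2; set y := (enum_val q).2.
case e: (x k == y k); case f: (isflip (a k)); rewrite /= ?mul0r ?mul1r //.
  by rewrite (pstr_off (j := k)) ?mulr0 // e f.
by rewrite (pstr_off (j := k)) ?mulr0 // e f.
Qed.

Lemma maskD k X Y : mmask k (X + Y) = mmask k X + mmask k Y.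
Proof. by apply/matrixP => p q; rewrite !mxE mulrDr. Qed.
Lemma maskZ k (c : C) X : mmask k (c *: X) = c *: mmask k X.
Proof. by apply/matrixP => p q; rewrite !mxE mulrCA. Qed.
Lemma maskB k X Y : mmask k (X - Y) = mmask k X - mmask k Y.
Proof. by apply/matrixP => p q; rewrite !mxE mulrBr. Qed.
Lemma mask_sum k (I : finType) (F : I -> mx) :
  mmask k (\sum_i F i) = \sum_i mmask k (F i).
Proof.
apply/matrixP => p q; rewrite !mxE !summxE mulr_sumr; apply: eq_bigr => i _.
by rewrite mxE.
Qed.

Definition Pk (k k1 l : 'I_M) (X : mx) : mx := mmask k (mmask k1 (X - mmask l X)).

Lemma PkD k k1 l X Y : Pk k k1 l (X + Y) = Pk k k1 l X + Pk k k1 l Y.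
Proof. by rewrite /Pk !maskD opprD addrACA !maskD. Qed.
Lemma PkZ k k1 l (c : C) X : Pk k k1 l (c *: X) = c *: Pk k k1 l X.
Proof. by rewrite /Pk !maskZ -scalerBr !maskZ. Qed.
Lemma Pk_sum k k1 l (I : finType) (F : I -> mx) :
  Pk k k1 l (\sum_i F i) = \sum_i Pk k k1 l (F i).
Proof. by rewrite /Pk mask_sum -sumrB !mask_sum. Qed.

Lemma Pk_tens k k1 l (A : 'I_N -> 'I_N -> C) (a : 'I_M -> pauli) :
  Pk k k1 l (tens A (pstr R a)) =
  (isflip (a k) && isflip (a k1) && ~~ isflip (a l))%:R *: tens A (pstr R a).
Proof.
rewrite /Pk mask_tens -{1}[tens A _]scale1r -scalerBl !maskZ !mask_tens !maskZ mask_tens !scalerA.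
congr (_ *: _).
by case: (isflip (a k)); case: (isflip (a k1)); case: (isflip (a l)); rewrite /= ?mulr0 ?mul0r ?subrr ?subr0 ?mulr1.
Qed.

Lemma idA_pstr (x y : acc) : idA R x y = pstr R (fun _ => P0) x y.
Proof.
rewrite /idA /pstr; case: (eqVneq x y) => [->|ne].
  by rewrite big1 // => j _; rewrite /= eqxx.
have [j hj] : exists j, x j != y j.
  apply/existsP; rewrite -negb_forall; apply: contra ne => /forallP h.
  by apply/eqP/ffunP => j; apply/eqP.
by rewrite (bigD1 j) //= (negbTE hj) mul0r.
Qed.

Lemma Pk_idA k k1 l (A : 'I_N -> 'I_N -> C) : Pk k k1 l (tens A (@idA R M)) = 0.
Proof.
by rewrite (@eq_tens A A _ (pstr R (fun _ => P0))) // ?Pk_tens ?scale0r // => x y; rewrite idA_pstr.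
Qed.

Lemma two_cond (k j : nat) (kk k1 l : 'I_M) :
  (kk : nat) = k -> (k1 : nat) = k.+1 -> (l : nat) != k -> (l : nat) != k.+1 ->
  (isflip (two j kk) && isflip (two j k1) && ~~ isflip (two j l)) = (j == k).
Proof.
move=> h1 h2 h3 h4; rewrite !two_val h1 h2.
have fl : forall b : bool, isflip (if b then PX else P0) = b by case.
rewrite !fl.
move: h3 h4; set L0 := (l : nat) => h3 h4.
by apply/idP/idP; lia.
Qed.

Lemma tens_mulT (a b : 'I_M -> pauli) :
  tens (@idS R N) (pstr R a) *m tens (@idS R N) (pstr R b) =
  ('i ^+ (\sum_j pe (a j) (b j))) *: tens (@idS R N) (pstr R (smul a b)).
Proof. exact: T_mul. Qed.

Lemma pe_two (j : nat) : (\sum_(l < M) pe (single (M:=M) j PX l) (single (M:=M) j.+1 PX l) = 0)%N.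
Proof.
apply: big1 => l _; rewrite /single.
case: eqP => [e|_]; last by case: (_ == _).
by rewrite e (_ : (j == j.+1) = false) //; lia.
Qed.

Lemma Pk_H0 (E : 'I_N -> R) hbar omega (c : 'I_M.-1 -> R) d g (k : 'I_M.-1) (kk k1 l : 'I_M) :
  (kk : nat) = k -> (k1 : nat) = k.+1 -> (l : nat) != k -> (l : nat) != k.+1 ->
  Pk kk k1 l (H_0 E hbar omega c d g) = (c k)%:C *: T (two k).
Proof.
move=> h1 h2 h3 h4.
rewrite /H_0 !PkD.
have -> : Pk kk k1 l (H_S M E) = 0 by rewrite /H_S Pk_idA.
have -> : Pk kk k1 l (H_S' M d) = 0.
  by rewrite /H_S' Pk_sum big1 // => j _; rewrite PkZ Pk_idA scaler0.
have -> : Pk kk k1 l (H_SA g) = 0.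
  rewrite /H_SA Pk_sum big1 // => j _; rewrite Pk_sum big1 // => k' _.
  rewrite Pk_sum big1 // => b _.
  rewrite PkZ Pk_tens.
  have -> : isflip (xy b l) = true by rewrite /xy; case: (b l).
  by rewrite andbF scale0r scaler0.
rewrite !Pk_sum !add0r addr0.
rewrite big1 ?add0r; last first.
  move=> j _; rewrite PkZ Pk_tens.
  have -> : isflip (single (M:=M) j PZ kk) = false by rewrite /single; case: (_ == _).
  by rewrite scale0r scaler0.
rewrite (bigD1 k) //= big1 ?addr0 ?addr0; last first.
  move=> j hj; rewrite PkZ tens_mulT pe_two expr0 scale1r Pk_tens -/(two j).
  by rewrite (two_cond _ h1 h2 h3 h4) (inj_eq (@ord_inj _)) (negbTE hj) scale0r scaler0.
rewrite PkZ tens_mulT pe_two expr0 scale1r Pk_tens -/(two k).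
by rewrite (two_cond _ h1 h2 h3 h4) eqxx scale1r.
Qed.
End Pauli.


Unset Implicit Arguments.
Theorem lemma4 (R : realType) (N M : nat) (hN : (2 <= N)%N) (hM : (2 < M)%N)
  (E : 'I_N -> R) (hE : \sum_(j < N) E j = 0)
  (hbar : R) (hhbar : 0 < hbar) (omega : 'I_M -> R) (c : 'I_M.-1 -> R)
  (d : 'I_N.-1 -> R) (g : 'I_N.-1 -> 'I_2 -> acc_idx M -> R)
  (cond1 : forall j : 'I_M.-1, c j != 0)
  (cond2 : exists beta : 'I_(N.-1 + N.-1) -> acc_idx M, \det (Gmx g beta) != 0) :
  let gens : mx R N M -> Prop := fun A =>
    A = 'i%C *: H_0 E hbar omega c d g \/
    exists j : 'I_M,
      A = 'i%C *: tens (idS R (N:=N)) (pstr R (single j PX)) \/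
      A = 'i%C *: tens (idS R (N:=N)) (pstr R (single j PY)) in
  forall alpha : 'I_M -> pauli, (exists j, alpha j <> P0) ->
    lie_gen gens ('i%C *: tens (idS R (N:=N)) (pstr R alpha)).
Proof.
move=> gens alpha [j0 hj0].
pose L := lie_gen gens.
have LX : forall j : 'I_M, L (P R N (single (M:=M) j PX)).
  by move=> j; apply: lie_base; right; exists j; left.
have LY : forall j : 'I_M, L (P R N (single (M:=M) j PY)).
  by move=> j; apply: lie_base; right; exists j; right.
have LZ : forall j : 'I_M, L (P R N (single (M:=M) j PZ)).
  move=> j; have := Lkey_lie (LX j) (LY j).
  rewrite cnt_single /single eqxx /= => /(_ isT).
  rewrite (eq_P R N (a := smul _ _) (b := single (M:=M) j PZ)) // => l.
  rewrite smul_single /single eqxx; case: (eqVneq l j) => [->|ne]; first by rewrite eqxx.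
  have nf : ((l:nat) == j) = false by apply/negbTE/ord_neq.
  by rewrite nf.
have Lsingle : forall (j : 'I_M) w, w != P0 -> L (P R N (single (M:=M) j w)).
  move=> j w; case: w => h; [by rewrite eqxx in h | exact: LX | exact: LY | exact: LZ].
have Lmask : forall k X, L X -> L (mmask k X).
  move=> k X hX.
  have n4 : (-4 : R) != 0 by rewrite oppr_eq0 pnatr_eq0.
  apply: (Lscale_inv n4); rewrite -mask_br.
  by apply: Lbr; [apply: LZ | apply: Lbr; [apply: LZ | exact: hX]].
have Ltwo : forall k, (k.+1 < M)%N -> L (P R N (two (M:=M) k)).
  move=> k hk.
  have hkM : (k < M.-1)%N by rewrite -ltnS prednK // (leq_trans _ hk).
  pose kc : 'I_M.-1 := Ordinal hkM.
  pose kk : 'I_M := Ordinal (ltnW hk).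
  pose k1 : 'I_M := Ordinal hk.
  have [l [hl3 hl4]] : exists l : 'I_M, (l : nat) != k /\ (l : nat) != k.+1.
    case: (eqVneq k 0%N) => [->|nk].
      by exists (Ordinal hM).
    by exists (Ordinal (ltn_trans (ltnSn 0) (ltn_trans (ltnSn 1) hM))); split => //=; rewrite eq_sym.
  have H0 : L ('i *: H_0 E hbar omega c d g) by apply: lie_base; left.
  have : L (Pk kk k1 l ('i *: H_0 E hbar omega c d g)).
    rewrite /Pk; apply: (Lmask); apply: (Lmask); apply: Lsub => //; exact: (Lmask).
  rewrite PkZ (@Pk_H0 R N M E hbar omega c d g kc kk k1 l) // scalerA mulrC -scalerA => h.
  exact: (Lscale_inv (cond1 kc)).
have := claim_all (L := L) _ Lsingle Ltwo (a := alpha).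
apply.
  by move=> a b ha hb ho; apply: Lkey_lie.
by exists j0; apply/eqP.
Qed.
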